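(* Let $A\in\mathbb R^{n\times n}$ be symmetric with bandwidth $b$, where $1<b<n$, and let $Q\in\mathbb R^{2n\times 2n}$ be the orthogonal matrix produced by Algorithm 2 (described in the context) applied to $A$. Then for every $1\le k<n$, the matrices $Q(1{:}k,\,k{+}1{:}n)$ and $Q(n{+}1{:}n{+}k,\,k{+}1{:}n)$ have rank at most $2b$.
   Context: A matrix has bandwidth $b$ if its $(i,j)$ entry vanishes whenever $|i-j|>b$. A Givens rotation on rows $p\ne q$ is an orthogonal matrix $G\in\mathbb R^{2n\times 2n}$ equal to the identity except in the entries $(p,p),(p,q),(q,p),(q,q)$, which form a $2\times2$ rotation $\begin{bmatrix}c&s\\-s&c\end{bmatrix}$, $c^2+s^2=1$. ''Rotate rows $p,q$ to annihilate $R(q,j)$'' means: choose such a $G$ for which $(G^{T}R)(q,j)=0$ and then update $R\leftarrow G^{T}R$, $Q\leftarrow QG$. Algorithm 2: Initialize $Q=I_{2n}$, $R=\begin{bmatrix}A\\ I_n\end{bmatrix}\in\mathbb R^{2n\times n}$. First rotate rows $1,n+1$ to annihilate $R(n+1,1)$; then for $j=2,\dots,\min\{n,b+1\}$ rotate rows $1,j$ to annihilate $R(j,1)$. Then for $i=2,\dots,n$: (a) rotate rows $n+1,n+i$ to annihilate $R(n+i,i)$; (b) for $j=i+1,\dots,\min\{n,b+i-1\}$, rotate rows $n+j,n+i$ to annihilate $R(n+i,j)$; (c) rotate rows $i,n+1$ to annihilate $R(n+1,i)$; (d) if $i<n$, for $j=i+1,\dots,\min\{n,b+i\}$ rotate rows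 $i,j$ to annihilate $R(j,i)$. On output $QR=\begin{bmatrix}A\\ I\end{bmatrix}$ with $R$ upper triangular. Notation $Q(a{:}b,c{:}d)$ denotes the submatrix with rows $a,\dots,b$ and columns $c,\dots,d$. *)

(* Defs.v *)
From HB Require Import structures.
From mathcomp Require Import all_boot all_order all_algebra.
Set Implicit Arguments. Unset Strict Implicit. Unset Printing Implicit Defensive.
Import Order.TTheory GRing.Theory Num.Theory.
Local Open Scope ring_scope.

(* Convention: row/column positions p, q, j below are 1-based as in the paper;
   a MathComp ordinal k : 'I_N sits at 1-based position k.+1. *)

Definition banded (R : ringType) (n b : nat) (A : 'M[R]_n) : Prop :=
  forall i j : 'I_n, ((b < i - j)%N || (b < j - i)%N) -> A i j = 0.

Definition givens (R : ringType) (N p q : nat) (c s : R) : 'M[R]_N :=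
  \matrix_(k < N, l < N)
    if ((k.+1 == p) && (l.+1 == p)) || ((k.+1 == q) && (l.+1 == q)) then c
    else if (k.+1 == p) && (l.+1 == q) then s
    else if (k.+1 == q) && (l.+1 == p) then - s
    else (k == l)%:R.

(* One step "rotate rows p,q to annihilate R(q,j)":
   (R, Q) becomes (G^T R, Q G) for some Givens rotation G on rows p,q
   with c^2 + s^2 = 1 and (G^T R)(q,j) = 0.  Any admissible choice is allowed. *)
Definition givens_step (R : ringType) (n : nat) (p q j : nat)
    (Rm : 'M[R]_(n + n, n)) (Q : 'M[R]_(n + n))
    (Rm' : 'M[R]_(n + n, n)) (Q' : 'M[R]_(n + n)) : Prop :=
  exists c s : R,
    [/\ c ^+ 2 + s ^+ 2 = 1,
        forall (k : 'I_(n + n)) (l : 'I_n), k.+1 = q -> l.+1 = j ->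
          ((givens (n + n) p q c s)^T *m Rm) k l = 0,
        Rm' = (givens (n + n) p q c s)^T *m Rm
      & Q' = Q *m givens (n + n) p q c s].

(* The ordered list of rotations (p, q, j) of Algorithm 2 (1-based). *)
Definition alg2_inner (n b i : nat) : seq (nat * nat * nat) :=
  ((n + 1, n + i, i)%N
     :: [seq (n + j, n + i, j)%N | j <- iota i.+1 (minn n (b + i - 1) - i)])
  ++ ((i, n + 1, i)%N
     :: (if (i < n)%N then [seq (i, j, i)%N | j <- iota i.+1 (minn n (b + i) - i)]
         else [::])).

Definition alg2_steps (n b : nat) : seq (nat * nat * nat) :=
  ((1, n + 1, 1)%N :: [seq (1, j, 1)%N | j <- iota 2 (minn n (b + 1) - 1)])
  ++ flatten [seq alg2_inner n b i | i <- iota 2 (n - 1)].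

Fixpoint alg2_run (R : ringType) (n : nat) (st : seq (nat * nat * nat))
    (Rm : 'M[R]_(n + n, n)) (Q : 'M[R]_(n + n))
    (Rf : 'M[R]_(n + n, n)) (Qf : 'M[R]_(n + n)) : Prop :=
  match st with
  | [::] => Rf = Rm /\ Qf = Q
  | (p, q, j) :: st' =>
      exists (Rm' : 'M[R]_(n + n, n)) (Q' : 'M[R]_(n + n)),
        givens_step p q j Rm Q Rm' Q' /\ alg2_run st' Rm' Q' Rf Qf
  end.

(* Entry of a matrix at 0-based nat indices (0 outside the range). *)
Definition mxe (R : ringType) (m n : nat) (M : 'M[R]_(m, n)) (a c : nat) : R :=
  match insub a, insub c with
  | Some i, Some j => M i j
  | _, _ => 0
  end.

(* Q(r0+1 : r0+k, k+1 : n) (1-based), i.e. a k x (n-k) block. *)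
Definition Qblock (R : ringType) (N : nat) (Q : 'M[R]_N) (r0 k n : nat)
  : 'M[R]_(k, n - k) :=
  \matrix_(i < k, j < n - k) mxe Q (r0 + i) (k + j).

(* Main.v *)
Require Import Defs.
From HB Require Import structures.
From mathcomp Require Import all_boot all_order all_algebra.
From mathcomp Require Import zify ring lra.
Set Implicit Arguments. Unset Strict Implicit. Unset Printing Implicit Defensive.
Import Order.TTheory GRing.Theory Num.Theory.
Local Open Scope ring_scope.

Section Gen.
Variable R : rcfType.

Lemma givensE N p q c s (x m P Qo : 'I_N) : P.+1 = p -> Qo.+1 = q -> (P:nat) != Qo ->
  givens N p q c s x m = if x == P :> nat then (if m == P :> nat then c else if m == Qo :> nat then s else 0)
   else if x == Qo :> nat then (if m == Qo :> nat then c else if m == P :> nat then -s else (0:R)) else (x == m)%:R.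
Proof.
move=> hP hQ; rewrite mxE -hP -hQ !eqSS.
have -> : (x == m) = (x == m :> nat) by [].
move: (x:nat) (m:nat) (P:nat) (Qo:nat) => a d u v uv.
do ![case: ifP => ? //=]; try (exfalso; lia); rewrite (_ : (a == d) = false) //; lia.
Qed.

Lemma givens_nz N p q c s (x m : 'I_N) : givens N p q c s x m != 0 :> R ->
  x = m \/ ((x.+1 == p) || (x.+1 == q)) && ((m.+1 == p) || (m.+1 == q)).
Proof.
rewrite mxE; do ![case: ifP => /= ?]; try (by right; lia).
case: (eqVneq x m) => [->|_]; first by left.
by rewrite eqxx.
Qed.

Lemma boolR (b : bool) : (b%:R : R) = if b then 1 else 0.
Proof. by case: b. Qed.

Lemma sum_rest (c0 s0 c1 s1 : R) N (P Qo x y : 'I_N) :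
  \sum_(i < N | (i != P) && (i != Qo))
      (if x == P :> nat then if i == P :> nat then c0 else if i == Qo :> nat then s0 else 0
       else if x == Qo :> nat then if i == Qo :> nat then c1 else if i == P :> nat then s1 else 0
        else (x == i)%:R) *
      (if y == P :> nat then if i == P :> nat then c0 else if i == Qo :> nat then s0 else 0
       else if y == Qo :> nat then if i == Qo :> nat then c1 else if i == P :> nat then s1 else 0
        else (y == i)%:R) =
  if [&& x != P, x != Qo, y != P & y != Qo] then (x == y)%:R else 0 :> R.
Proof.
have Hr : forall i : 'I_N, (i != P) && (i != Qo) -> ((i:nat) == P) = false /\ ((i:nat) == Qo) = false.
  by move=> i /andP[iP iQ]; split; apply/negbTE.
case: (x =P P) => [->|/eqP xP] /=.
  by rewrite eqxx big1 // => i /Hr [-> ->]; rewrite mul0r.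
case: (x =P Qo) => [->|/eqP xQ] /=.
  rewrite big1 // => i /Hr [-> ->]; rewrite eqxx; case: ifP => _; by rewrite mul0r.
have -> : ((x:nat) == P) = false by apply/negbTE.
have -> : ((x:nat) == Qo) = false by apply/negbTE.
case: (y =P P) => [->|/eqP yP] /=.
  by rewrite eqxx big1 // => i /Hr [-> ->] /=; rewrite mulr0.
case: (y =P Qo) => [->|/eqP yQ] /=.
  by rewrite eqxx big1 // => i /Hr [-> ->] /=; case: ((Qo:nat) == P); rewrite /= mulr0.
have -> : ((y:nat) == P) = false by apply/negbTE.
have -> : ((y:nat) == Qo) = false by apply/negbTE.
rewrite (bigD1 x) /=; last by rewrite xP xQ.
rewrite eqxx mul1r big1 ?addr0; first by rewrite eq_sym.
move=> i /andP[_ ix].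
by rewrite (eq_sym x) (negbTE ix) mul0r.
Qed.

Lemma givens_orth N p q (c s : R) : c ^+ 2 + s ^+ 2 = 1 -> (0 < p <= N)%N -> (0 < q <= N)%N -> p != q ->
  givens N p q c s *m (givens N p q c s)^T = 1%:M.
Proof.
move=> cs hp hq pq.
have lP : (p.-1 < N)%N by lia.
have lQ : (q.-1 < N)%N by lia.
set P := Ordinal lP; set Qo := Ordinal lQ.
have hP : P.+1 = p by rewrite /= prednK //; lia.
have hQ : Qo.+1 = q by rewrite /= prednK //; lia.
have PQ : (P : nat) != Qo by rewrite /=; lia.
clearbody P Qo.
apply/matrixP => x y; rewrite [RHS]mxE mxE.
under eq_bigr => i _ do rewrite [X in _ * X]mxE !(givensE _ _ _ _ hP hQ PQ).
have PQo : Qo != P by apply/eqP => h; move: PQ; rewrite h eqxx.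
rewrite (bigD1 P) // (bigD1 Qo) /=; last by rewrite PQo.
rewrite sum_rest.
rewrite -[x == y]/(x == y :> nat) -[x != P]/(x != P :> nat) -[x != Qo]/(x != Qo :> nat).
rewrite -[y != P]/(y != P :> nat) -[y != Qo]/(y != Qo :> nat).
rewrite -[x == P]/(x == P :> nat) -[x == Qo]/(x == Qo :> nat) -[y == P]/(y == P :> nat) -[y == Qo]/(y == Qo :> nat).
move: (x:nat) (y:nat) (P:nat) (Qo:nat) PQ cs => a d u v uv cs.
rewrite !boolR.
do ![case: ifP => ? /=]; rewrite ?mulr0 ?mul0r ?addr0 ?add0r ?mulr1 ?mul1r //; try (exfalso; lia).
all: rewrite -?cs; ring.
Qed.

Definition supp n (Rm : 'M[R]_(n+n,n)) (S : nat -> nat -> Prop) :=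
  forall (k : 'I_(n+n)) (l : 'I_n), ~ S k.+1 l.+1 -> Rm k l = 0.

Lemma step_supp n p q j (Rm : 'M[R]_(n+n,n)) Q Rm' Q' (S T : nat -> nat -> Prop) :
  givens_step p q j Rm Q Rm' Q' -> supp Rm S ->
  (forall r c, (1 <= r <= n+n)%N -> (1 <= c <= n)%N -> r <> p -> r <> q -> ~ T r c -> ~ S r c) ->
  (forall r c, (1 <= r <= n+n)%N -> (1 <= c <= n)%N -> (r = p \/ r = q) -> ~ T r c ->
      ~ (r = q /\ c = j) -> ~ S p c /\ ~ S q c) ->
  supp Rm' T.
Proof.
move=> [c0 [s0 [_ Hann -> _]]] HS H1 H2 k l HT.
have bk : (1 <= k.+1 <= n+n)%N by have := ltn_ord k; lia.
have bl : (1 <= l.+1 <= n)%N by have := ltn_ord l; lia.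
case: (boolP ((k.+1 == q) && (l.+1 == j))) => [/andP[/eqP kq /eqP lj]|nqj].
  exact: Hann.
have nqj' : ~ (k.+1 = q /\ l.+1 = j) by move=> [kq lj]; move: nqj; rewrite kq lj !eqxx.
rewrite mxE; apply: big1 => m _; rewrite mxE.
case: (eqVneq (givens (n + n) p q c0 s0 m k) 0) => [->|nz]; first by rewrite mul0r.
apply/eqP; rewrite mulf_eq0; apply/orP; right; apply/eqP; apply: HS.
have [mk|/andP[hm hk]] := givens_nz nz.
  subst m; case: (boolP ((k.+1 == p) || (k.+1 == q))) => hk.
    have hk' : k.+1 = p \/ k.+1 = q by case/orP: hk => /eqP; tauto.
    have [h1 h2] := H2 _ _ bk bl hk' HT nqj'.
    by case: hk' => ->.
  by apply: H1 => // e; move: hk; rewrite e eqxx ?orbT.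
have hk' : k.+1 = p \/ k.+1 = q by case/orP: hk => /eqP; tauto.
have [h1 h2] := H2 _ _ bk bl hk' HT nqj'.
by case/orP: hm => /eqP ->.
Qed.

Lemma step_prod n p q j (Rm : 'M[R]_(n+n,n)) Q Rm' Q' :
  givens_step p q j Rm Q Rm' Q' -> (0 < p <= n+n)%N -> (0 < q <= n+n)%N -> p != q ->
  Q' *m Rm' = Q *m Rm.
Proof.
move=> [c0 [s0 [cs _ -> ->]]] hp hq pq.
by rewrite -mulmxA (mulmxA (givens _ _ _ _ _)) givens_orth // mul1mx.
Qed.

Definition hoare n st (P P' : 'M[R]_(n+n,n) -> 'M[R]_(n+n) -> Prop) :=
  forall Rm Q Rf Qf, alg2_run st Rm Q Rf Qf -> P Rm Q -> P' Rf Qf.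

Lemma run_cat n s1 s2 (Rm : 'M[R]_(n+n,n)) Q Rf Qf :
  alg2_run (s1 ++ s2) Rm Q Rf Qf ->
  exists Rm' Q', alg2_run s1 Rm Q Rm' Q' /\ alg2_run s2 Rm' Q' Rf Qf.
Proof.
elim: s1 Rm Q => [|[[p q] j] s1 IH] Rm Q /=; first by move=> h; exists Rm, Q.
move=> [Rm1 [Q1 [Hs Hr]]]; have [Rm2 [Q2 [H1 H2]]] := IH _ _ Hr.
by exists Rm2, Q2; split => //; exists Rm1, Q1.
Qed.

Lemma hoare_cat n s1 s2 (P P1 P2 : 'M[R]_(n+n,n) -> 'M[R]_(n+n) -> Prop) :
  hoare s1 P P1 -> hoare s2 P1 P2 -> hoare (s1 ++ s2) P P2.
Proof.
move=> h1 h2 Rm Q Rf Qf /run_cat [Rm' [Q' [r1 r2]]] HP.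
exact: h2 r2 (h1 _ _ _ _ r1 HP).
Qed.

Lemma hoare_nil n (P P' : 'M[R]_(n+n,n) -> 'M[R]_(n+n) -> Prop) :
  (forall Rm Q, P Rm Q -> P' Rm Q) -> hoare [::] P P'.
Proof. by move=> h Rm Q Rf Qf /= [-> ->]; apply: h. Qed.

Lemma hoare_conseq n s (P P0 P1 P2 : 'M[R]_(n+n,n) -> 'M[R]_(n+n) -> Prop) :
  (forall Rm Q, P Rm Q -> P0 Rm Q) -> hoare s P0 P1 ->
  (forall Rm Q, P1 Rm Q -> P2 Rm Q) -> hoare s P P2.
Proof. by move=> h0 h h2 Rm Q Rf Qf r HP; apply/h2/(h _ _ _ _ r)/h0. Qed.

Lemma hoare_iota n (f : nat -> seq (nat * nat * nat))
    (I : nat -> 'M[R]_(n+n,n) -> 'M[R]_(n+n) -> Prop) a m :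
  (forall t, (a <= t < a + m)%N -> hoare (f t) (I t) (I t.+1)) ->
  hoare (flatten [seq f t | t <- iota a m]) (I a) (I (a + m)%N).
Proof.
elim: m a => [|m IH] a h /=.
  by rewrite addn0; apply: hoare_nil.
apply: hoare_cat; first by apply: h; lia.
rewrite (_ : (a + m.+1)%N = (a.+1 + m)%N); last by lia.
by apply: IH => t ht; apply: h; lia.
Qed.

Lemma hoare_map n (g : nat -> nat * nat * nat)
    (I : nat -> 'M[R]_(n+n,n) -> 'M[R]_(n+n) -> Prop) a m :
  (forall t, (a <= t < a + m)%N -> hoare [:: g t] (I t) (I t.+1)) ->
  hoare [seq g t | t <- iota a m] (I a) (I (a + m)%N).
Proof.
move=> h; have := @hoare_iota n (fun t => [:: g t]) I a m h.
suff -> : flatten [seq [:: g t] | t <- iota a m] = [seq g t | t <- iota a m] by [].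
by elim: (iota a m) => //= x s ->.
Qed.

Definition St n (C : 'M[R]_(n+n,n)) (S : nat -> nat -> Prop) (Rm : 'M[R]_(n+n,n)) (Q : 'M[R]_(n+n)) :=
  supp Rm S /\ Q *m Rm = C.

Lemma hoare_step n (C : 'M[R]_(n+n,n)) p q j (S T : nat -> nat -> Prop) :
  (0 < p <= n+n)%N -> (0 < q <= n+n)%N -> p != q ->
  (forall r c, (1 <= r <= n+n)%N -> (1 <= c <= n)%N -> r <> p -> r <> q -> S r c -> T r c) ->
  (forall r c, (1 <= r <= n+n)%N -> (1 <= c <= n)%N -> (r = p \/ r = q) ->
      ~ (r = q /\ c = j) -> (S p c \/ S q c) -> T r c) ->
  hoare [:: (p, q, j)] (St C S) (St C T).
Proof.
move=> hp hq pq H1 H2 Rm Q Rf Qf /= [Rm1 [Q1 [Hs [-> ->]]]] [HS HC]; split.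
  apply: (step_supp Hs HS).
    by move=> r c h1 h2 h3 h4 nT hS; apply: nT; apply: H1.
  by move=> r c h1 h2 h3 nT h4; split => hS; apply: nT; apply: H2 => //; tauto.
by rewrite (step_prod Hs).
Qed.

Local Open Scope nat_scope.

Ltac splitS := repeat match goal with H : _ \/ _ |- _ => destruct H | H : _ /\ _ |- _ => destruct H end.
Ltac disj := match goal with |- _ \/ _ => first [left; lia | right; disj] | _ => lia end.
Ltac solveS := move=> r c *; splitS; subst; disj.

Definition Stop (n b i r c : nat) : Prop :=
  (r <= n /\ r < i /\ r <= c /\ c <= r + 2*b) \/ (r <= n /\ i <= r /\ i <= c /\ r <= c + b /\ c <= r + b).
Definition Sinv n b i r c : Prop := Stop n b i r c \/ (r = n+1 /\ i <= c /\ c+1 <= i+b) \/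
  (n+2 <= r /\ i+n <= r /\ r <= c+n /\ (c+n = r \/ c+2 <= i+b)).
Definition Smid n b i r c : Prop := Stop n b i r c \/ (r = n+1 /\ i <= c /\ c+1 <= i+b) \/
  (n+2 <= r /\ i+n < r /\ r <= c+n /\ (c+n = r \/ c+1 <= i+b)).
Definition SB n b i t r c : Prop := Stop n b i r c \/ (r = n+1 /\ i <= c /\ c+1 <= i+b) \/
  (r = n+i /\ t <= c /\ c+1 <= i+b) \/ (n+i < r /\ r < n+t /\ r <= c+n /\ c+1 <= i+b) \/
  (n+t <= r /\ r <= c+n /\ (c+n = r \/ c+2 <= i+b)).
Definition SD n b i t r c : Prop := (r <= n /\ r < i /\ r <= c /\ c <= r + 2*b) \/
  (r = i /\ i <= c /\ c+1 <= t+b) \/ (r <= n /\ i < r /\ r < t /\ i+1 <= c /\ c <= r+b) \/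
  (r <= n /\ t <= r /\ i <= c /\ r <= c+b /\ c <= r+b) \/ (r = n+1 /\ i+1 <= c /\ c <= i+b) \/
  (n+2 <= r /\ i+n < r /\ r <= c+n /\ (c+n = r \/ c+1 <= i+b)).

Lemma phase_a n b (C : 'M[R]_(n+n,n)) i : 1 < b -> 2 <= i <= n ->
  hoare [:: (n+1, n+i, i)] (St C (Sinv n b i)) (St C (SB n b i i.+1)).
Proof.
move=> hb hi; apply: hoare_step; try lia; rewrite /Sinv /SB /Stop; solveS.
Qed.

Lemma phase_b n b (C : 'M[R]_(n+n,n)) i t : 1 < b -> 2 <= i <= n -> i+1 <= t -> t <= n -> t+1 <= b+i ->
  hoare [:: (n+t, n+i, t)] (St C (SB n b i t)) (St C (SB n b i t.+1)).
Proof.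
move=> hb hi ht1 ht2 ht3; apply: hoare_step; try lia; rewrite /SB /Stop; solveS.
Qed.

Lemma phase_c n b (C : 'M[R]_(n+n,n)) i : 1 < b -> 1 <= i <= n ->
  hoare [:: (i, n+1, i)] (St C (Smid n b i)) (St C (SD n b i i.+1)).
Proof.
move=> hb hi; apply: hoare_step; try lia; rewrite /Smid /SD /Stop; solveS.
Qed.

Lemma phase_d n b (C : 'M[R]_(n+n,n)) i t : 1 < b -> 1 <= i <= n -> i+1 <= t -> t <= n -> t <= b+i ->
  hoare [:: (i, t, i)] (St C (SD n b i t)) (St C (SD n b i t.+1)).
Proof.
move=> hb hi ht1 ht2 ht3; apply: hoare_step; try lia; rewrite /SD; solveS.
Qed.

Lemma St_weaken n (C : 'M[R]_(n+n,n)) (S T : nat -> nat -> Prop) Rm Q :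
  (forall r c, 1 <= r <= n+n -> 1 <= c <= n -> S r c -> T r c) -> St C S Rm Q -> St C T Rm Q.
Proof.
move=> h [HS HC]; split => // k l nT; apply: HS => hS; apply: nT; apply: h hS.
  by have := ltn_ord k; lia.
by have := ltn_ord l; lia.
Qed.

Lemma end_b n b i r c : 1 < b -> 2 <= i <= n -> 1 <= r <= n+n -> 1 <= c <= n ->
  SB n b i (minn n (b+i-1)).+1 r c -> Smid n b i r c.
Proof. rewrite /SB /Smid /Stop => *; splitS; subst; disj. Qed.

Lemma end_d n b i r c : 1 < b -> 1 <= i <= n -> 1 <= r <= n+n -> 1 <= c <= n ->
  SD n b i (minn n (b+i)).+1 r c -> Sinv n b i.+1 r c.
Proof. rewrite /SD /Sinv /Stop => *; splitS; subst; disj. Qed.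

Lemma start1 n b r c : 1 < b -> 1 <= r <= n+n -> 1 <= c <= n -> Sinv n b 1 r c -> Smid n b 1 r c.
Proof. rewrite /Sinv /Smid /Stop => *; splitS; subst; disj. Qed.

Lemma hoare_inner n b (C : 'M[R]_(n+n,n)) i : 1 < b -> 2 <= i <= n ->
  hoare (alg2_inner n b i) (St C (Sinv n b i)) (St C (Sinv n b i.+1)).
Proof.
move=> hb hi; rewrite /alg2_inner; apply: (hoare_cat (P1 := St C (Smid n b i))).
  apply: (hoare_cat (s1 := [:: _])); first exact: phase_a.
  have := @hoare_map n (fun j => (n+j, n+i, j)) (fun t => St C (SB n b i t)) i.+1 (minn n (b+i-1) - i).
  rewrite (_ : i.+1 + (minn n (b+i-1) - i) = (minn n (b+i-1)).+1); last lia.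
  move=> h; apply: (hoare_conseq _ (h _)).
  - by [].
  - by move=> t ht; apply: phase_b; lia.
  - by move=> Rm Q; apply: St_weaken => r c h1 h2; apply: end_b.
apply: (hoare_cat (s1 := [:: _])); first by apply: phase_c; lia.
have -> : (if i < n then [seq (i, j, i) | j <- iota i.+1 (minn n (b+i) - i)] else [::])
          = [seq (i, j, i) | j <- iota i.+1 (minn n (b+i) - i)].
  by case: ifP => // hn; rewrite (_ : minn n (b+i) - i = 0) //; lia.
have := @hoare_map n (fun j => (i, j, i)) (fun t => St C (SD n b i t)) i.+1 (minn n (b+i) - i).
rewrite (_ : i.+1 + (minn n (b+i) - i) = (minn n (b+i)).+1); last lia.
move=> h; apply: (hoare_conseq _ (h _)).
- by [].
- by move=> t ht; apply: phase_d; lia.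
- by move=> Rm Q; apply: St_weaken => r c h1 h2; apply: end_d => //; lia.
Qed.

Lemma hoare_all n b (C : 'M[R]_(n+n,n)) : 1 < b -> b < n ->
  hoare (alg2_steps n b) (St C (Sinv n b 1)) (St C (Sinv n b n.+1)).
Proof.
move=> hb hbn; rewrite /alg2_steps; apply: (hoare_cat (P1 := St C (Sinv n b 2))).
  apply: (hoare_conseq (P0 := St C (Smid n b 1))).
  - by move=> Rm Q; apply: St_weaken => r c h1 h2; apply: start1.
  - apply: (hoare_cat (s1 := [:: _])); first by apply: phase_c; lia.
    have := @hoare_map n (fun j => (1, j, 1)) (fun t => St C (SD n b 1 t)) 2 (minn n (b+1) - 1).
    rewrite (_ : 2 + (minn n (b+1) - 1) = (minn n (b+1)).+1); last lia.
    move=> h; apply: (h _) => t ht; apply: phase_d; lia.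
  - by move=> Rm Q; apply: St_weaken => r c h1 h2; apply: end_d => //; lia.
have := @hoare_iota n (alg2_inner n b) (fun t => St C (Sinv n b t)) 2 (n - 1).
rewrite (_ : 2 + (n - 1) = n.+1); last lia.
by move=> h; apply: h => t ht; apply: hoare_inner; lia.
Qed.

Lemma init_St n b (A : 'M[R]_n) : 1 < b -> banded b A ->
  St (col_mx A 1%:M) (Sinv n b 1) (col_mx A 1%:M) 1%:M.
Proof.
move=> hb hA; split; last by rewrite mul1mx.
move=> k l nS; case: (splitP k) => k' hk.
  have -> : k = lshift n k' by apply: val_inj.
  rewrite col_mxEu; apply: hA.
  apply/negPn/negP => h; apply: nS; rewrite /Sinv /Stop hk.
  have := ltn_ord k'; have := ltn_ord l; move: h; rewrite negb_or -!leqNgt => /andP[h1 h2] *.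
  left; right; lia.
have -> : k = rshift n k' by apply: val_inj.
rewrite col_mxEd mxE.
case: (eqVneq k' l) => [e|ne]; last by [].
exfalso; apply: nS; rewrite /Sinv /Stop hk -e.
have := ltn_ord k'; move=> *; disj.
Qed.

Local Close Scope nat_scope.

Lemma mxeE m p (M : 'M[R]_(m, p)) (i : 'I_m) (j : 'I_p) : mxe M i j = M i j.
Proof.
rewrite /mxe (insubT (fun x => (x < m)%N) (ltn_ord i)) (insubT (fun x => (x < p)%N) (ltn_ord j)) /=.
by congr (M _ _); apply: val_inj.
Qed.

Lemma mxe_outr m p (M : 'M[R]_(m, p)) a c : (p <= c)%N -> mxe M a c = 0.
Proof.
move=> h; rewrite /mxe; case: insubP => [? _ _|_] //.
by rewrite insubF //; apply/negbTE; rewrite -leqNgt.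
Qed.

Lemma mxe_col m1 m2 p (A : 'M[R]_(m1, p)) (B : 'M[R]_(m2, p)) a c : (a < m1 + m2)%N ->
  mxe (col_mx A B) a c = if (a < m1)%N then mxe A a c else mxe B (a - m1) c.
Proof.
move=> ha; case: (ltnP c p) => hc; last by rewrite !mxe_outr //; case: ifP.
pose o := Ordinal ha; pose o' := Ordinal hc.
have -> : a = o by [].
have -> : c = o' by [].
rewrite mxeE; case: (splitP o) => a' e.
  have -> : o = lshift m2 a' by apply: val_inj.
  by rewrite col_mxEu; exact: (esym (mxeE A a' o')).
have -> : o = rshift m1 a' by apply: val_inj.
rewrite col_mxEd /= addKn; exact: (esym (mxeE B a' o')).
Qed.

Lemma det_upper m (T : 'M[R]_m) : (forall i j : 'I_m, (j < i)%N -> T i j = 0) -> \det T = \prod_i T i i.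
Proof.
move=> h; rewrite -det_tr det_trig; first by apply: eq_bigr => i _; rewrite mxE.
by apply/is_trig_mxP => i j ij; rewrite mxE; apply: h.
Qed.

Lemma sum_split_k (F : nat -> R) k n : (k <= n)%N ->
  \sum_(m < n) F m = \sum_(m < k) F m + \sum_(j < n - k) F (k + j)%N.
Proof.
move=> kn; move: (n - k)%N (subnKC kn) => d e; subst n.
by rewrite big_split_ord.
Qed.

Lemma rank_block n b k r0 (Q : 'M[R]_(n+n)) (Rf : 'M[R]_(n+n,n)) (C : 'M[R]_(n+n,n)) :
  (k <= n)%N -> (r0 + k <= n + n)%N ->
  (forall x y, (x < n+n)%N -> (y < n)%N -> \sum_(m < n) mxe Q x m * mxe Rf m y = mxe C x y) ->
  (forall m c, (c < m)%N \/ (m + 2*b < c)%N -> mxe Rf m c = 0) ->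
  (forall m, (m < n)%N -> mxe Rf m m != 0) ->
  (forall i j, (i < k)%N -> (2*b <= j)%N -> (k + j < n)%N -> mxe C (r0 + i) (k + j) = 0) ->
  (\rank (Qblock Q r0 k n) <= 2 * b)%N.
Proof.
move=> kn hr hsum hband hdiag hC.
set X := Qblock Q r0 k n.
pose T22 : 'M[R]_(n - k) := \matrix_(i, j) mxe Rf (k + i) (k + j).
have T22u : T22 \in unitmx.
  rewrite unitmxE unitfE det_upper; last first.
    by move=> i j ji; rewrite mxE; apply: hband; left; rewrite ltn_add2l.
  by apply/prodf_neq0 => i _; rewrite mxE; apply: hdiag; have := ltn_ord i; lia.
rewrite -(mxrankMfree X (B:=T22)); last by rewrite row_free_unit.
set M := X *m T22.
have HM : forall (i : 'I_k) (j : 'I_(n-k)), (2*b <= j)%N -> M i j = 0.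
  move=> i j hj; rewrite mxE.
  have hi := ltn_ord i; have hjj := ltn_ord j.
  have := hsum (r0 + i)%N (k + j)%N ltac:(lia) ltac:(lia).
  rewrite (sum_split_k (fun m => mxe Q (r0 + i)%N m * mxe Rf m (k + j)%N) kn) big1 ?add0r; last first.
    by move=> m _; rewrite (hband m (k+j)%N) ?mulr0 //; right; have := ltn_ord m; lia.
  rewrite hC //; last by lia.
  by move=> e; rewrite -[RHS]e; apply: eq_bigr => m _; rewrite !mxE.
pose Y : 'M[R]_(k, 2*b) := \matrix_(i, j) mxe M i j.
pose F : 'M[R]_(2*b, n-k) := \matrix_(i, j) (i == j :> nat)%:R.
have -> : M = Y *m F.
  apply/matrixP => i j; rewrite [RHS]mxE.
  case: (ltnP j (2*b)) => hj.
    rewrite (bigD1 (Ordinal hj)) //= big1 ?addr0.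
      by rewrite [Y _ _]mxE [F _ _]mxE eqxx mulr1 (mxeE M i j).
    move=> m hm; rewrite !mxE.
    have -> : (m == j :> nat) = false.
      by apply/negbTE; apply: contra hm => /eqP e; apply/eqP; apply: val_inj.
    by rewrite mulr0.
  rewrite HM // big1 // => m _; rewrite !mxE.
  have -> : (m == j :> nat) = false by have := ltn_ord m; lia.
  by rewrite mulr0.
by apply: leq_trans (mxrankM_maxl _ _) (rank_leq_col _).
Qed.

Lemma mxe_outl m p (M : 'M[R]_(m, p)) a c : (m <= a)%N -> mxe M a c = 0.
Proof.
by move=> h; rewrite /mxe insubF //; apply/negbTE; rewrite -leqNgt.
Qed.

Lemma mxe_ord m p (M : 'M[R]_(m, p)) a c (ha : (a < m)%N) (hc : (c < p)%N) :
  mxe M a c = M (Ordinal ha) (Ordinal hc).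
Proof. exact: (mxeE M (Ordinal ha) (Ordinal hc)). Qed.

Lemma mxe_one m a c : (a < m)%N -> (c < m)%N -> mxe (1%:M : 'M[R]_m) a c = (a == c)%:R.
Proof. by move=> ha hc; rewrite (mxe_ord _ ha hc) mxE. Qed.

Lemma final_facts n b (A : 'M[R]_n) (Rf : 'M[R]_(n + n, n)) (Q : 'M[R]_(n + n)) :
  St (col_mx A 1%:M) (Sinv n b n.+1) Rf Q ->
  [/\ (forall x y, (x < n+n)%N -> (y < n)%N ->
        \sum_(m < n) mxe Q x m * mxe Rf m y = mxe (col_mx A 1%:M) x y),
      (forall m c, (c < m)%N \/ (m + 2*b < c)%N -> mxe Rf m c = 0) &
      (forall m, (m < n)%N -> mxe Rf m m != 0)].
Proof.
move=> [HS HC].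
have hband : forall m c, (c < m)%N \/ (m + 2*b < c)%N -> mxe Rf m c = 0.
  move=> m c h.
  case: (ltnP m (n+n)) => hm; last by rewrite mxe_outl.
  case: (ltnP c n) => hc; last by rewrite mxe_outr.
  rewrite (mxe_ord _ hm hc); apply: HS => /=.
  rewrite /Sinv /Stop => H; splitS; lia.
have hsum : forall x y, (x < n+n)%N -> (y < n)%N ->
        \sum_(m < n) mxe Q x m * mxe Rf m y = mxe (col_mx A 1%:M) x y.
  move=> x y hx hy; rewrite (mxe_ord _ hx hy) -HC mxE big_split_ord /=.
  rewrite [X in _ = _ + X]big1 ?addr0; last first.
    move=> i _; rewrite HS ?mulr0 //= => H.
    have := ltn_ord i; move: H; rewrite /Sinv /Stop => H; splitS; lia.
  apply: eq_bigr => i _.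
  have -> : lshift n i = Ordinal (ltn_addr n (ltn_ord i)) by apply: val_inj.
  by rewrite (mxe_ord Q hx (ltn_addr n (ltn_ord i))) (mxe_ord Rf (ltn_addr n (ltn_ord i)) hy).
split => //.
pose T : 'M[R]_n := \matrix_(i, j) mxe Rf i j.
pose Q21 : 'M[R]_n := \matrix_(i, j) mxe Q (n + i)%N j.
have QT : Q21 *m T = 1%:M.
  apply/matrixP => i j; rewrite !mxE.
  have hi : (n + i < n + n)%N by rewrite ltn_add2l.
  have := hsum (n + i)%N j hi (ltn_ord j).
  rewrite mxe_col // ltnNge leq_addr /= addKn mxe_one // => <-.
  by apply: eq_bigr => m _; rewrite !mxE.
have [_ Tu] := mulmx1_unit QT.
move: Tu; rewrite unitmxE unitfE det_upper; last first.
  by move=> i j ji; rewrite mxE; apply: hband; left.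
move=> /prodf_neq0 h m hm.
by have := h (Ordinal hm) isT; rewrite mxE.
Qed.
End Gen.

Local Open Scope ring_scope.

Theorem theorem4p3 (R : rcfType) (n b : nat) (A : 'M[R]_n)
    (Rf : 'M[R]_(n + n, n)) (Q : 'M[R]_(n + n)) :
  (1 < b)%N -> (b < n)%N ->
  A^T = A -> banded b A ->
  alg2_run (alg2_steps n b) (col_mx A 1%:M) 1%:M Rf Q ->
  forall k : nat, (1 <= k)%N -> (k < n)%N ->
    (\rank (Qblock Q 0 k n) <= 2 * b)%N /\
    (\rank (Qblock Q n k n) <= 2 * b)%N.
Proof.
move=> hb hbn hAt hA Hrun k hk1 hkn.
have St0 := init_St hb hA.
have Sf := @hoare_all R n b (col_mx A 1%:M) hb hbn _ _ _ _ Hrun St0.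
have [hsum hband hdiag] := final_facts Sf.
split.
  apply: (rank_block (Rf := Rf) (C := col_mx A 1%:M) _ _ hsum hband hdiag); try lia.
  move=> i j hi hj hkj; rewrite add0n mxe_col; last lia.
  have hin : (i < n)%N by lia.
  rewrite hin (mxe_ord A hin hkj); apply: hA => /=; lia.
apply: (rank_block (Rf := Rf) (C := col_mx A 1%:M) _ _ hsum hband hdiag); try lia.
move=> i j hi hj hkj; rewrite mxe_col; last lia.
have hin : (i < n)%N by lia.
rewrite ltnNge leq_addr /= addKn mxe_one //.
by have -> : (i == k + j)%N = false by lia.
Qed.
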